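(* Let $G$ be a discrete group, let $X$ and $Y$ be minimal $G$-flows with $Y$ essentially free, and let $\pi\colon X\to Y$ be a continuous surjective $G$-equivariant map. If $Y$ has the separated covering property, then so does $X$.
   Context: A $G$-flow is a compact Hausdorff space with an action of $G$ by homeomorphisms; it is minimal if every orbit is dense, and essentially free if for every $g\in G\setminus\{e\}$ the set $\{x: g\cdot x=x\}$ has empty interior. For finite $D\subseteq G$, a set $S\subseteq G$ is $D$-separated if $Dg\cap Dh=\emptyset$ for all distinct $g,h\in S$. A minimal $G$-flow $X$ has the separated covering property if for every finite $D\subseteq G$ and every non-empty open $U\subseteq X$ there exists a $D$-separated $S\subseteq G$ with $S^{-1}U=X$. *)

(* Defs.v *)
From Stdlib Require Import List Classical.
Import ListNotations.
Set Implicit Arguments.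
Unset Strict Implicit.

Record Group := {
  gcar :> Type;
  gmul : gcar -> gcar -> gcar;
  gone : gcar;
  ginv : gcar -> gcar;
  gmul_assoc : forall a b c, gmul a (gmul b c) = gmul (gmul a b) c;
  gmul_1l : forall a, gmul gone a = a;
  gmul_1r : forall a, gmul a gone = a;
  gmul_Vl : forall a, gmul (ginv a) a = gone;
  gmul_Vr : forall a, gmul a (ginv a) = gone
}.

Record TopSpace := {
  tcar :> Type;
  is_open : (tcar -> Prop) -> Prop;
  open_full : is_open (fun _ => True);
  open_empty : is_open (fun _ => False);
  open_union : forall (I : Type) (U : I -> tcar -> Prop),
      (forall i, is_open (U i)) -> is_open (fun x => exists i, U i x);
  open_inter : forall U V, is_open U -> is_open V -> is_open (fun x => U x /\ V x);
  open_ext : forall U V, (forall x, U x <-> V x) -> is_open U -> is_open V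
}.

Arguments is_open {t} _.
Arguments gmul {g} _ _.
Arguments gone {g}.
Arguments ginv {g} _.

Definition continuous (X Y : TopSpace) (f : X -> Y) : Prop :=
  forall V : Y -> Prop, is_open V -> is_open (fun x => V (f x)).

Definition compact (X : TopSpace) : Prop :=
  forall (I : Type) (U : I -> X -> Prop),
    (forall i, is_open (U i)) -> (forall x, exists i, U i x) ->
    exists l : list I, forall x, exists i, In i l /\ U i x.

Definition hausdorff (X : TopSpace) : Prop :=
  forall x y : X, x <> y ->
    exists U V : X -> Prop, is_open U /\ is_open V /\ U x /\ V y /\
      (forall z, ~ (U z /\ V z)).

(** * G-flows: compact Hausdorff spaces with an action of G by homeomorphisms
    (each [act g] is continuous, with continuous inverse [act (ginv g)]). *)
Record Flow (G : Group) := {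
  fsp :> TopSpace;
  act : G -> fsp -> fsp;
  act_one : forall x, act (gone) x = x;
  act_mul : forall (g h : G) x, act (gmul g h) x = act g (act h x);
  act_cont : forall g : G, continuous (act g);
  f_compact : compact fsp;
  f_hausdorff : hausdorff fsp
}.

Arguments act {G} f _ _.

Definition minimal (G : Group) (X : Flow G) : Prop :=
  forall (x : X) (U : X -> Prop), is_open U -> (exists y, U y) ->
    exists g : G, U (act X g x).

Definition essentially_free (G : Group) (X : Flow G) : Prop :=
  forall g : G, g <> gone ->
    forall U : X -> Prop, is_open U -> (forall x, U x -> act X g x = x) ->
      forall x, ~ U x.

Definition equivariant (G : Group) (X Y : Flow G) (f : X -> Y) : Prop :=
  forall (g : G) (x : X), f (act X g x) = act Y g (f x).

(** A finite D ⊆ G is given by a list.  S ⊆ G is D-separated if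
    Dg ∩ Dh = ∅ for distinct g, h ∈ S. *)
Definition separated (G : Group) (D : list G) (S : G -> Prop) : Prop :=
  forall g h : G, S g -> S h -> g <> h ->
    forall d1 d2 : G, In d1 D -> In d2 D -> gmul d1 g <> gmul d2 h.

(** S^{-1} U = X, i.e. every x lies in s^{-1} U for some s ∈ S. *)
Definition covers (G : Group) (X : Flow G) (S : G -> Prop) (U : X -> Prop) : Prop :=
  forall x : X, exists s : G, S s /\ U (act X s x).

Definition separated_covering (G : Group) (X : Flow G) : Prop :=
  forall (D : list G) (U : X -> Prop), is_open U -> (exists y, U y) ->
    exists S : G -> Prop, separated D S /\ covers S U.

(* Main.v *)
Require Import Defs.
From Stdlib Require Import List Classical.
From Stdlib Require Import ClassicalEpsilon Lia.
Import ListNotations.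

Section Count.
Context {A B : Type} (Q : A -> B -> Prop).

Fixpoint cnt (l : list A) (b : B) : nat :=
  match l with
  | [] => 0
  | a :: l' => (if excluded_middle_informative (Q a b) then 1 else 0) + cnt l' b
  end.

Lemma cnt_le l b : cnt l b <= length l.
Proof.
  induction l; simpl; [lia|]. destruct (excluded_middle_informative _); lia.
Qed.

Lemma cnt_mono l b1 b : (forall a, In a l -> Q a b1 -> Q a b) ->
  cnt l b1 <= cnt l b /\ ((exists a, In a l /\ Q a b /\ ~ Q a b1) -> cnt l b1 < cnt l b).
Proof.
  induction l as [|a l IH]; intros Hsub; simpl.
  - split; [lia| intros [a [[] _]]].
  - destruct (IH (fun a' Ha' => Hsub a' (or_intror Ha'))) as [IH1 IH2].
    destruct (excluded_middle_informative (Q a b1)) as [q1|q1];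
    destruct (excluded_middle_informative (Q a b)) as [q|q].
    + split; [lia|]. intros [a' [[<-|Ha'] [Hq Hnq]]]; [contradiction|].
      assert (cnt l b1 < cnt l b) by (apply IH2; eauto). lia.
    + exfalso; apply q; apply Hsub; auto; left; auto.
    + split; [lia|]. intros; lia.
    + split; [lia|]. intros [a' [[<-|Ha'] [Hq Hnq]]]; [contradiction|].
      assert (cnt l b1 < cnt l b) by (apply IH2; eauto). lia.
Qed.

Lemma cnt_max l (b0 : B) : exists b1, forall b, cnt l b <= cnt l b1.
Proof.
  apply NNPP. intro Hno.
  assert (Hgrow : forall n, exists b, n <= cnt l b).
  { induction n. exists b0; lia. destruct IHn as [b Hb]. apply NNPP; intro Hn.
    apply Hno. exists b. intro b'. apply NNPP. intro Hlt. apply Hn. exists b'. lia. }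
  destruct (Hgrow (S (length l))) as [b Hb]. pose proof (cnt_le l b). lia.
Qed.

Lemma max_profile l (b0 : B) : exists b1, forall b,
  (forall a, In a l -> Q a b1 -> Q a b) -> forall a, In a l -> Q a b -> Q a b1.
Proof.
  destruct (cnt_max l b0) as [b1 Hb1]. exists b1. intros b Hsub a Ha Hq.
  apply NNPP; intro Hn.
  destruct (cnt_mono l b1 b Hsub) as [_ H2].
  specialize (H2 (ex_intro _ a (conj Ha (conj Hq Hn)))). specialize (Hb1 b). lia.
Qed.
End Count.

Section Aux.
Context (G : Group).

Lemma g_cancel_r (a b c : G) : gmul a c = gmul b c -> a = b.
Proof.
  intro H. transitivity (gmul (gmul a c) (ginv c)).
  - rewrite <- gmul_assoc, gmul_Vr, gmul_1r; reflexivity.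
  - rewrite H, <- gmul_assoc, gmul_Vr, gmul_1r; reflexivity.
Qed.

Lemma g_cancel_l (a b c : G) : gmul c a = gmul c b -> a = b.
Proof.
  intro H. transitivity (gmul (ginv c) (gmul c a)).
  - rewrite gmul_assoc, gmul_Vl, gmul_1l; reflexivity.
  - rewrite H, gmul_assoc, gmul_Vl, gmul_1l; reflexivity.
Qed.

Lemma inv_mul_one (a b : G) : gmul (ginv a) b = gone -> b = a.
Proof.
  intro H. transitivity (gmul a (gmul (ginv a) b)).
  - rewrite gmul_assoc, gmul_Vr, gmul_1l; reflexivity.
  - rewrite H, gmul_1r; reflexivity.
Qed.

Lemma open_forall_list {X : TopSpace} {A : Type} (l : list A) (P : A -> X -> Prop) :
  (forall a, is_open (P a)) -> is_open (fun x => forall a, In a l -> P a x).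
Proof.
  intro HP. induction l as [|a l IH].
  - apply (open_ext (U := fun _ => True)).
    + intro x; split; [intros _ a []|auto].
    + apply open_full.
  - apply (open_ext (U := fun x => P a x /\ (forall b, In b l -> P b x))).
    + intro x; split.
      * intros [H1 H2] b [<-|Hb]; auto.
      * intro H; split; [apply H; left; auto| intros; apply H; right; auto].
    + apply open_inter; auto.
Qed.

Lemma open_nonfix (X : Flow G) (c : G) : is_open (fun y : X => act X c y <> y).
Proof.
  set (I := {p : (X -> Prop) * (X -> Prop) | is_open (fst p) /\ is_open (snd p) /\
              forall z, ~ (fst p z /\ snd p z)}).
  apply (open_ext (U := fun z => exists i : I, snd (proj1_sig i) z /\ fst (proj1_sig i) (act X c z))).
  - intro z. split.
    + intros [i [Hb Ha]] E. destruct i as [p Hp]. destruct Hp as [HA [HB HAB]]. simpl in *.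
      apply (HAB z). rewrite E in Ha. auto.
    + intro Hne. destruct (f_hausdorff Hne) as (A & B & HA & HB & HAc & HBz & HAB).
      exists (exist _ (A,B) (conj HA (conj HB HAB))). simpl. auto.
  - apply open_union. intros [p Hp]. simpl. destruct Hp as [HA [HB _]]. apply open_inter; auto.
    apply (act_cont c). auto.
Qed.

Lemma no_fix_cover (Y : Flow G) : essentially_free Y -> forall L : list G,
  (forall c, In c L -> c <> gone) -> forall O : Y -> Prop, is_open O -> (exists y, O y) ->
  ~ (forall y, O y -> exists c, In c L /\ act Y c y = y).
Proof.
  intros Hfree L. induction L as [|c L IH]; intros HL O HO [y0 Hy0] Hcov.
  - destruct (Hcov y0 Hy0) as [c [[] _]].
  - destruct (classic (exists y, O y /\ act Y c y <> y)) as [[y1 Hy1]|Hno].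
    + apply (IH (fun c' Hc' => HL c' (or_intror Hc')) (fun y => O y /\ act Y c y <> y)).
      * apply open_inter; auto. apply open_nonfix.
      * exists y1; auto.
      * intros y [Hy Hne]. destruct (Hcov y Hy) as [c' [[<-|Hc'] Hfix]].
        -- contradiction.
        -- eauto.
    + apply (Hfree c (HL c (or_introl eq_refl)) O HO) with y0; auto.
      intros x Hx. apply NNPP. intro Hne. apply Hno. eauto.
Qed.

Lemma finite_return (X : Flow G) : minimal X -> forall O : X -> Prop, is_open O ->
  (exists y, O y) -> exists H : list G, forall x, exists h, In h H /\ O (act X h x).
Proof.
  intros Hmin O HO Hne.
  destruct (@f_compact G X G (fun g x => O (act X g x))) as [H HH].
  - intro g. apply (act_cont g). auto.
  - intro x. apply Hmin; auto.
  - exists H. exact HH.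
Qed.

Lemma exists_nonfix (X Y : Flow G) (pi : X -> Y) : minimal X -> essentially_free Y ->
  (forall y, exists x, pi x = y) -> equivariant pi -> forall g : G, g <> gone ->
  forall O : X -> Prop, is_open O -> (exists x, O x) ->
  exists x, O x /\ act Y g (pi x) <> pi x.
Proof.
  intros Hmin Hfree Hsurj Heq g Hg O HO [x0 Hx0].
  apply NNPP. intro Hno.
  destruct (finite_return X Hmin O HO (ex_intro _ x0 Hx0)) as [H HH].
  apply (no_fix_cover Y Hfree (map (fun h => gmul (ginv h) (gmul g h)) H)) with (O := fun _ => True).
  - intros c Hc. apply in_map_iff in Hc. destruct Hc as [h [<- _]]. intro E. apply Hg.
    apply inv_mul_one in E. apply (g_cancel_r _ _ h). rewrite E, gmul_1l. reflexivity.
  - apply open_full.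
  - exists (pi x0). auto.
  - intros y _. destruct (Hsurj y) as [x <-]. destruct (HH x) as [h [Hh HOx]].
    exists (gmul (ginv h) (gmul g h)). split.
    + exact (in_map (fun h => gmul (ginv h) (gmul g h)) H h Hh).
    + assert (E : act Y g (pi (act X h x)) = pi (act X h x))
        by (apply NNPP; intro; apply Hno; eauto).
      rewrite !act_mul. rewrite Heq in E. rewrite E, <- act_mul, gmul_Vl, act_one. reflexivity.
Qed.

Lemma build_W (X Y : Flow G) (pi : X -> Y) : minimal X -> essentially_free Y -> continuous pi ->
  (forall y, exists x, pi x = y) -> equivariant pi -> forall U : X -> Prop, is_open U ->
  (exists x, U x) -> forall L : list G, exists W : Y -> Prop, is_open W /\
  (exists x, U x /\ W (pi x)) /\
  (forall g, In g L -> g <> gone -> forall y, W y -> ~ W (act Y g y)).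
Proof.
  intros Hmin Hfree Hpi Hsurj Heq U HU HUne L. induction L as [|g L IH].
  - exists (fun _ => True). split; [apply open_full|]. split.
    + destruct HUne as [x Hx]; eauto.
    + intros g [].
  - destruct IH as [W [HW [Hne Hwand]]].
    destruct (classic (g = gone)) as [Hg|Hg].
    + exists W. split; auto. split; auto. intros g' [<-|Hg'] Hne'.
      * contradiction.
      * auto.
    + destruct (exists_nonfix X Y pi Hmin Hfree Hsurj Heq g Hg (fun x => U x /\ W (pi x)))
        as [x1 [[HUx1 HWx1] Hfx]].
      * apply open_inter; [exact HU | apply Hpi; exact HW].
      * exact Hne.
      * destruct (f_hausdorff Hfx) as (A & B & HA & HB & HAx & HBx & HAB).
        exists (fun y => W y /\ B y /\ A (act Y g y)). split.
        { apply open_inter; auto. apply open_inter; auto. apply (act_cont g); auto. }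
        split. { exists x1. auto. }
        intros g' [<-|Hg'] Hne' y [Wy [By Ay]] [Wy' [By' Ay']].
        { apply (HAB (act Y g y)); auto. }
        { apply (Hwand g' Hg' Hne' y Wy Wy'). }
Qed.
End Aux.

Theorem proposition2p7 (G : Group) (X Y : Flow G) (pi : X -> Y) :
  minimal X -> minimal Y -> essentially_free Y ->
  continuous pi -> (forall y : Y, exists x : X, pi x = y) -> equivariant pi ->
  separated_covering Y -> separated_covering X.
Proof.
  intros HminX HminY Hfree Hpi Hsurj Heq HscY D U HU HUne.
  set (L := map (fun p : G * G => gmul (ginv (snd p)) (fst p)) (list_prod D D)).
  destruct (build_W G X Y pi HminX Hfree Hpi Hsurj Heq U HU HUne L) as [W [HW [HWne Hwand]]].
  assert (HU' : is_open (fun x => U x /\ W (pi x))) by (apply open_inter; auto; apply Hpi; auto).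
  destruct (finite_return G X HminX _ HU' HWne) as [F HF].
  destruct HWne as [x0 _].
  destruct (max_profile (fun f y => W (act Y f y)) F (pi x0)) as [y1 Hy1].
  set (V := fun y => forall f, In f F -> (W (act Y f y1) -> W (act Y f y))).
  assert (HV : is_open V).
  { apply open_forall_list. intro f. destruct (classic (W (act Y f y1))) as [Hw|Hw].
    - apply (open_ext (U := fun y => W (act Y f y))).
      + intro y; split; auto.
      + apply (act_cont f); auto.
    - apply (open_ext (U := fun _ => True)).
      + intro y; split; [intros _ H; contradiction| auto].
      + apply open_full. }
  set (D' := map (fun p : G * G => gmul (fst p) (snd p)) (list_prod D F)).
  destruct (HscY D' V HV (ex_intro _ y1 (fun f _ h => h))) as [S' [HsepS' HcovS']].
  exists (fun t => exists s f, S' s /\ In f F /\ W (act Y f y1) /\ t = gmul f s).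
  split.
  - intros t1 t2 (s1 & f1 & Hs1 & Hf1 & Hw1 & ->) (s2 & f2 & Hs2 & Hf2 & Hw2 & ->) Hne
      d1 d2 Hd1 Hd2 E.
    rewrite !gmul_assoc in E.
    destruct (classic (s1 = s2)) as [<-|Hs].
    + apply g_cancel_r in E.
      assert (Hf : f1 <> f2) by (intro; subst; apply Hne; reflexivity).
      destruct (classic (gmul (ginv d2) d1 = gone)) as [Hg|Hg].
      * apply Hf. apply inv_mul_one in Hg. subst d1. exact (g_cancel_l G _ _ _ E).
      * apply (Hwand (gmul (ginv d2) d1)) with (act Y f1 y1); auto.
        -- apply in_map_iff. exists (d1, d2). split; auto. apply in_prod; auto.
        -- rewrite <- act_mul.
           replace (gmul (gmul (ginv d2) d1) f1) with f2; auto.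
           rewrite <- gmul_assoc, E, gmul_assoc, gmul_Vl, gmul_1l. reflexivity.
    + apply (HsepS' s1 s2 Hs1 Hs2 Hs (gmul d1 f1) (gmul d2 f2)); auto.
      * apply in_map_iff; exists (d1,f1); split; auto; apply in_prod; auto.
      * apply in_map_iff; exists (d2,f2); split; auto; apply in_prod; auto.
  - intro x. destruct (HcovS' (pi x)) as [s [Hs HVs]].
    destruct (HF (act X s x)) as [f [Hf [HUf HWf]]].
    exists (gmul f s). split.
    + exists s, f. repeat split; auto.
      rewrite Heq, Heq in HWf.
      exact (Hy1 (act Y s (pi x)) HVs f Hf HWf).
    + rewrite act_mul. exact HUf.
Qed.
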